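(* Let $\alpha,\beta\in\mathbb{R}$ and $\eta\in\{1,-1\}$, and let $G_4$ be the connected, simply connected Lie group whose Lie algebra $\mathfrak{g}_4$ has a basis $\{e_1,e_2,e_3\}$ with $[e_1,e_2]=-e_2+(2\eta-\beta)e_3$, $[e_1,e_3]=-\beta e_2+e_3$, $[e_2,e_3]=\alpha e_1$, equipped with the left-invariant Lorentzian metric $g$ for which $\{e_1,e_2,e_3\}$ is pseudo-orthonormal with $e_3$ timelike, and with the product structure $J$. Then $(G_4,g,J)$ is not an algebraic Schouten soliton associated to the Kobayashi–Nomizu connection $\nabla^1$: for no real numbers $\lambda_0,c$ does there exist a derivation $D$ of $\mathfrak{g}_4$ with $\widetilde{\mathrm{Ric}}^1=(s^1\lambda_0+c)\mathrm{Id}+D$.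
   Context: Pseudo-orthonormal means $g(e_1,e_1)=g(e_2,e_2)=1$, $g(e_3,e_3)=-1$, $g(e_i,e_j)=0$ for $i\neq j$; left-invariant tensors are identified with their values on $\mathfrak{g}$. $\nabla$ is the Levi-Civita connection of $g$. The product structure $J$ is the left-invariant endomorphism with $Je_1=e_1$, $Je_2=e_2$, $Je_3=-e_3$. The canonical connection is $\nabla^0_XY=\nabla_XY-\frac12(\nabla_XJ)JY$, and the Kobayashi–Nomizu connection is $\nabla^1_XY=\nabla^0_XY-\frac14[(\nabla_YJ)JX-(\nabla_{JY}J)X]$. For $k=0,1$: $R^k(X,Y)Z=\nabla^k_X\nabla^k_YZ-\nabla^k_Y\nabla^k_XZ-\nabla^k_{[X,Y]}Z$; $\rho^k(X,Y)=-g(R^k(X,e_1)Y,e_1)-g(R^k(X,e_2)Y,e_2)+g(R^k(X,e_3)Y,e_3)$; $\widetilde\rho^k(X,Y)=\frac12(\rho^k(X,Y)+\rho^k(Y,X))$; $\widetilde{\mathrm{Ric}}^k$ is defined by $\widetilde\rho^k(X,Y)=g(\widetilde{\mathrm{Ric}}^k(X),Y)$; and $s^k=\widetilde\rho^k(e_1,e_1)+\widetilde\rho^k(e_2,e_2)-\widetilde\rho^k(e_3,e_3)$. A derivation of $\mathfrak{g}$ is a linear map $D$ with $D[X,Y]=[DX,Y]+[X,DY]$. $(G,g,J)$ is an algebraic Schouten soliton associated to $\nabla^k$ (with real constants $\lambda_0,c$) if $\widetilde{\mathrm{Ric}}^k=(s^k\lambda_0+c)\mathrm{Id}+D$ for some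 derivation $D$. *)

(* Defs.v *)
From Stdlib Require Import Reals.
Open Scope R_scope.

(** The Lie algebra g_4 is modelled as R^3 with coordinates w.r.t. the
    basis {e1,e2,e3}.  All tensors are left-invariant and identified with
    their values on the Lie algebra. *)
Record vec := mkV { v1 : R; v2 : R; v3 : R }.

Definition e1 : vec := mkV 1 0 0.
Definition e2 : vec := mkV 0 1 0.
Definition e3 : vec := mkV 0 0 1.

Definition vadd (X Y : vec) : vec := mkV (v1 X + v1 Y) (v2 X + v2 Y) (v3 X + v3 Y).
Definition vscale (a : R) (X : vec) : vec := mkV (a * v1 X) (a * v2 X) (a * v3 X).
Definition vsub (X Y : vec) : vec := vadd X (vscale (-1) Y).

Definition gmet (X Y : vec) : R := v1 X * v1 Y + v2 X * v2 Y - v3 X * v3 Y.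

(** Lie bracket of g_4 (bilinear extension of the structure equations)
    [e1,e2] = -e2 + (2 eta - beta) e3, [e1,e3] = -beta e2 + e3,
    [e2,e3] = alpha e1. *)
Definition br12 (alpha beta eta : R) : vec := mkV 0 (-1) (2 * eta - beta).
Definition br13 (alpha beta eta : R) : vec := mkV 0 (- beta) 1.
Definition br23 (alpha beta eta : R) : vec := mkV alpha 0 0.

Definition bracket (alpha beta eta : R) (X Y : vec) : vec :=
  vadd (vscale (v1 X * v2 Y - v2 X * v1 Y) (br12 alpha beta eta))
   (vadd (vscale (v1 X * v3 Y - v3 X * v1 Y) (br13 alpha beta eta))
         (vscale (v2 X * v3 Y - v3 X * v2 Y) (br23 alpha beta eta))).

(** Levi-Civita connection on left-invariant fields, via the Koszul formula
    2 g(nabla_X Y, Z) = g([X,Y],Z) - g([Y,Z],X) + g([Z,X],Y),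
    and expansion in the pseudo-orthonormal basis
    V = g(V,e1) e1 + g(V,e2) e2 - g(V,e3) e3. *)
Definition koszul (a b h : R) (X Y Z : vec) : R :=
  / 2 * (gmet (bracket a b h X Y) Z - gmet (bracket a b h Y Z) X
         + gmet (bracket a b h Z X) Y).

Definition nabla (a b h : R) (X Y : vec) : vec :=
  mkV (koszul a b h X Y e1) (koszul a b h X Y e2) (- koszul a b h X Y e3).

Definition Jop (X : vec) : vec := mkV (v1 X) (v2 X) (- v3 X).

Definition nablaJ (a b h : R) (X Y : vec) : vec :=
  vsub (nabla a b h X (Jop Y)) (Jop (nabla a b h X Y)).

Definition nabla0 (a b h : R) (X Y : vec) : vec :=
  vsub (nabla a b h X Y) (vscale (/ 2) (nablaJ a b h X (Jop Y))).

Definition nabla1 (a b h : R) (X Y : vec) : vec :=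
  vsub (nabla0 a b h X Y)
       (vscale (/ 4) (vsub (nablaJ a b h Y (Jop X)) (nablaJ a b h (Jop Y) X))).

Definition curv1 (a b h : R) (X Y Z : vec) : vec :=
  vsub (vsub (nabla1 a b h X (nabla1 a b h Y Z)) (nabla1 a b h Y (nabla1 a b h X Z)))
       (nabla1 a b h (bracket a b h X Y) Z).

Definition rho1 (a b h : R) (X Y : vec) : R :=
  - gmet (curv1 a b h X e1 Y) e1 - gmet (curv1 a b h X e2 Y) e2
  + gmet (curv1 a b h X e3 Y) e3.

Definition rho1sym (a b h : R) (X Y : vec) : R :=
  / 2 * (rho1 a b h X Y + rho1 a b h Y X).

(** Ricci operator: g(Ric X, Y) = rho~(X,Y). *)
Definition Ric1 (a b h : R) (X : vec) : vec :=
  mkV (rho1sym a b h X e1) (rho1sym a b h X e2) (- rho1sym a b h X e3).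

Definition scal1 (a b h : R) : R :=
  rho1sym a b h e1 e1 + rho1sym a b h e2 e2 - rho1sym a b h e3 e3.

Definition is_linear (D : vec -> vec) : Prop :=
  forall (s t : R) (X Y : vec), D (vadd (vscale s X) (vscale t Y)) = vadd (vscale s (D X)) (vscale t (D Y)).

Definition is_derivation (a b h : R) (D : vec -> vec) : Prop :=
  is_linear D /\
  forall X Y : vec, D (bracket a b h X Y) = vadd (bracket a b h (D X) Y) (bracket a b h X (D Y)).

Definition algebraic_schouten_soliton1 (a b h lambda0 c : R) : Prop :=
  exists D : vec -> vec, is_derivation a b h D /\
    forall X : vec, Ric1 a b h X = vadd (vscale (scal1 a b h * lambda0 + c) X) (D X).

(* Main.v *)
Require Import Defs.
From Stdlib Require Import Reals Lra.
Open Scope R_scope.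
Lemma NAB a b h x1 x2 x3 y1 y2 y3 : nabla a b h (mkV x1 x2 x3) (mkV y1 y2 y3) =
 mkV ((1/2)*a*x2*y3 + (-1/2)*a*x3*y2 + (-1)*x2*y2 + (-1)*h*x3*y2 + (-1)*x3*y3 + (-1)*h*x2*y3) ((1)*x2*y1 + (-1)*b*x1*y3 + (1/2)*a*x1*y3 + (1)*h*x3*y1 + (1/2)*a*x3*y1 + (1)*h*x1*y3) ((1)*h*x1*y2 + (-1)*b*x1*y2 + (-1)*h*x2*y1 + (-1)*x3*y1 + (1/2)*a*x1*y2 + (1/2)*a*x2*y1).
Proof.
unfold nabla, koszul, bracket, gmet, br12, br13, br23, vsub, vadd, vscale, e1, e2, e3. cbn [v1 v2 v3].
f_equal; field.
Qed.
Lemma N1 a b h X Y : nabla1 a b h X Y =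
  mkV (- v2 X * v2 Y - a * v3 X * v2 Y) (v2 X * v1 Y + b * v3 X * v1 Y) (v1 X * v3 Y).
Proof. destruct X as [x1 x2 x3], Y as [y1 y2 y3].
unfold nabla1, nabla0, nablaJ, Jop, vsub, vadd, vscale. cbn [v1 v2 v3].
rewrite !NAB. cbn [v1 v2 v3]. f_equal; field. Qed.
Ltac vcomp := unfold Ric1, rho1sym, rho1, curv1; rewrite !N1;
  unfold bracket, gmet, br12, br13, br23, vsub, vadd, vscale, e1, e2, e3; cbn [v1 v2 v3]; f_equal; field.
Lemma R1 a b h : Ric1 a b h e1 = mkV (-1 + 2*b*h - b^2) 0 0.
Proof. vcomp. Qed.
Lemma R2 a b h : Ric1 a b h e2 = mkV 0 (2*a*h - a*b - 1) (- a / 2).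
Proof. vcomp. Qed.
Lemma R3 a b h : Ric1 a b h e3 = mkV 0 (a/2) 0.
Proof. vcomp. Qed.
Lemma lin2 D (s t : R) X Y : is_linear D -> D (vadd (vscale s X) (vscale t Y)) = vadd (vscale s (D X)) (vscale t (D Y)).
Proof. intros H; apply H. Qed.

Lemma key a b : a*(1-3*b+2*b^2)+b=0 -> a*(4*b-2*b^2-a-1)=0 -> -a+a*b+2-b=0 -> False.
Proof. intros A B C.
destruct (Req_dec a 0) as [Ha|Ha].
- subst a. lra.
- assert (Ha' : 4*b-2*b^2-a-1 = 0).
  { apply Rmult_integral in B. destruct B as [B|B]; [contradiction|exact B]. }
  assert (Hae : a = 4*b-2*b^2-1) by lra. subst a.
  assert (C' : 2*(b-1)^3 - 1 = 0) by nra.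
  assert (A' : 4*(b-1)^4 + 2*(b-1)^3 - 2*(b-1)^2 - 2*(b-1) - 1 = 0) by nra.
  assert (U : (b-1)^2 = 0) by nra.
  assert (U' : b - 1 = 0) by (destruct (Req_dec (b-1) 0) as [e|e]; [exact e | exfalso; exact (pow_nonzero _ 2 e U)]).
  rewrite U' in C'. lra.
Qed.

Theorem theorem4p9 (alpha beta eta : R) (Heta : eta = 1 \/ eta = -1) :
  forall lambda0 c : R, ~ algebraic_schouten_soliton1 alpha beta eta lambda0 c.
Proof.
intros l c [D [[Hlin Hder] HR]].
set (k := scal1 alpha beta eta * l + c) in HR. clearbody k.
set (a := alpha) in *. set (b := beta) in *.
assert (HD : forall h, h = eta -> (h = 1 \/ h = -1) ->
  -a + a*b*h + 2*h - b = 0 /\ a*(1 - 3*b*h + 2*b^2) + b = 0 /\ a*(4*b*h - 2*b^2 - a*h - 1) = 0).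
2:{ destruct Heta as [He|He].
  - destruct (HD 1) as (C&A&B); [now rewrite He | now left|].
    apply (key a b); lra.
  - destruct (HD (-1)) as (C&A&B); [now rewrite He | now right|].
    apply (key (-a) (-b)); lra. }
intros h Hh Hh1. subst eta.
assert (E1 : D e1 = mkV (-1 + 2*b*h - b^2 - k) 0 0).
{ pose proof (HR e1) as H; rewrite R1 in H; destruct (D e1) as [p q r];
  unfold vadd, vscale, e1 in H; cbn [v1 v2 v3] in H; injection H; intros; f_equal; lra. }
assert (E2 : D e2 = mkV 0 (2*a*h - a*b - 1 - k) (- a / 2)).
{ pose proof (HR e2) as H; rewrite R2 in H; destruct (D e2) as [p q r];
  unfold vadd, vscale, e2 in H; cbn [v1 v2 v3] in H; injection H; intros; f_equal; lra. }
assert (E3 : D e3 = mkV 0 (a/2) (-k)).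
{ pose proof (HR e3) as H; rewrite R3 in H; destruct (D e3) as [p q r];
  unfold vadd, vscale, e3 in H; cbn [v1 v2 v3] in H; injection H; intros; f_equal; lra. }
assert (B12 : bracket a b h e1 e2 = vadd (vscale (-1) e2) (vscale (2*h-b) e3)).
{ unfold bracket, br12, br13, br23, vadd, vscale, e1, e2, e3; cbn [v1 v2 v3]; f_equal; ring. }
assert (B13 : bracket a b h e1 e3 = vadd (vscale (-b) e2) (vscale 1 e3)).
{ unfold bracket, br12, br13, br23, vadd, vscale, e1, e2, e3; cbn [v1 v2 v3]; f_equal; ring. }
assert (B23 : bracket a b h e2 e3 = vadd (vscale a e1) (vscale 0 e2)).
{ unfold bracket, br12, br13, br23, vadd, vscale, e1, e2, e3; cbn [v1 v2 v3]; f_equal; ring. }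
pose proof (Hder e1 e2) as H12. rewrite B12, lin2, E1, E2, E3 in H12 by exact Hlin.
pose proof (Hder e1 e3) as H13. rewrite B13, lin2, E1, E2, E3 in H13 by exact Hlin.
pose proof (Hder e2 e3) as H23. rewrite B23, lin2, E1, E2, E3 in H23 by exact Hlin.
unfold bracket, br12, br13, br23, vadd, vscale, e1, e2, e3 in H12, H13, H23; cbn [v1 v2 v3] in H12, H13, H23.
pose proof (f_equal v2 H12) as A1. pose proof (f_equal v3 H12) as A2.
pose proof (f_equal v2 H13) as A3. pose proof (f_equal v3 H13) as A4.
pose proof (f_equal v1 H23) as A5. cbn [v1 v2 v3] in A1, A2, A3, A4, A5.
clear H12 H13 H23 B12 B13 B23 E1 E2 E3 HR Hder Hlin.
assert (Hk : k = a*h - a*b - 1 + 2*b*h - b^2) by lra.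
subst k.
destruct Hh1 as [-> | ->]; split; [|split| |split]; nra.

Qed.
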